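(* There is a constant $c>0$ such that the following holds for all $n\ge 2$. Let $t$ be a qubit and $c_1,\dots,c_n$ qubits different from $t$. Let $U_1,\dots,U_n$ be $2\times 2$ unitaries that mutually commute ($U_iU_j=U_jU_i$ for all $i,j$), and let $G_i$ be the controlled-$U_i$ gate with control $c_i$ and target $t$. Then the operator $G_nG_{n-1}\cdots G_1$ can be embedded, using at most $cn$ ancillae, in a quantum circuit of depth at most $c\log n$.
   Context: Qubits have computational basis $|0\rangle,|1\rangle$. For a $2\times2$ unitary $U$, the controlled-$U$ gate on (control, target) is $\begin{pmatrix}I&0\\0&U\end{pmatrix}$, applying $U$ to the target when the control is $|1\rangle$. A one-layer circuit is a tensor product of arbitrary one-qubit and two-qubit unitary gates acting on pairwise disjoint sets of qubits; a circuit of depth $k$ is a product of $k$ one-layer circuits. An operator $F$ on $n'$ qubits is embedded in an operator $M$ on $n'+m$ qubits using $m$ ancillae if $M(|\psi\rangle\otimes|0\cdots0\rangle)=(F|\psi\rangle)\otimes|0\cdots0\rangle$ for all $|\psi\rangle$, where the last $m$ qubits are the ancillae. *)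

(* Defs.v *)
From Stdlib Require Import Reals.
From HB Require Import structures.
From mathcomp Require Import all_boot all_order all_algebra.
From mathcomp Require Import complex Rstruct.
Set Implicit Arguments. Unset Strict Implicit. Unset Printing Implicit Defensive.
Import Order.TTheory GRing.Theory Num.Theory.
Local Open Scope ring_scope.

Definition Cplx := (Rdefinitions.R)[i].

Definition basis (N : nat) := {ffun 'I_N -> bool}.

Definition op (N : nat) := basis N -> basis N -> Cplx.
Definition state (N : nat) := basis N -> Cplx.

Definition op_id N : op N := fun x y => (x == y)%:R.
Definition op_mul N (A B : op N) : op N :=
  fun x y => \sum_(z : basis N) A x z * B z y.
Definition op_apply N (A : op N) (v : state N) : state N :=
  fun x => \sum_(y : basis N) A x y * v y.

Definition unitary k (U : 'M[Cplx]_k) : Prop :=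
  U *m (map_mx (@conjc _) U)^T = 1%:M.

Definition bit2 (b : bool) : 'I_2 := inord (nat_of_bool b).
Definition bit4 (a b : bool) : 'I_4 := inord (2 * nat_of_bool a + nat_of_bool b).

Definition agree_off N (s : seq 'I_N) (x y : basis N) : bool :=
  [forall i, (i \notin s) ==> (x i == y i)].

(* one-qubit and two-qubit gates (the 4x4 matrix is w.r.t. the ordered pair
   (q1,q2), basis index 2*b_{q1} + b_{q2}) *)
Inductive gate (N : nat) :=
  | Gate1 of 'I_N & 'M[Cplx]_2
  | Gate2 of 'I_N & 'I_N & 'M[Cplx]_4.

Definition gate_support N (g : gate N) : seq 'I_N :=
  match g with Gate1 q _ => [:: q] | Gate2 q1 q2 _ => [:: q1; q2] end.

Definition gate_valid N (g : gate N) : Prop :=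
  match g with
  | Gate1 _ U => unitary U
  | Gate2 q1 q2 U => q1 != q2 /\ unitary U
  end.

(* the gate acting on the N-qubit system (tensored with identity elsewhere) *)
Definition gate_op N (g : gate N) : op N :=
  fun x y => (agree_off (gate_support g) x y)%:R *
    match g with
    | Gate1 q U => U (bit2 (x q)) (bit2 (y q))
    | Gate2 q1 q2 U => U (bit4 (x q1) (x q2)) (bit4 (y q1) (y q2))
    end.

(* a one-layer circuit: gates on pairwise disjoint sets of qubits; its operator
   (the tensor product of its gates) is the product of the gates' operators *)
Definition layer N := seq (gate N).
Definition layer_valid N (l : layer N) : Prop :=
  (forall g, List.In g l -> gate_valid g) /\ uniq (flatten (map (@gate_support N) l)).
Definition layer_op N (l : layer N) : op N :=
  foldr (@op_mul N) (@op_id N) (map (@gate_op N) l).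

(* a circuit of depth k = list of k layers; the first layer is applied first *)
Definition circuit N := seq (layer N).
Definition circuit_valid N (c : circuit N) : Prop :=
  forall l, List.In l c -> layer_valid l.
Definition circuit_op N (c : circuit N) : op N :=
  foldl (fun acc l => op_mul (layer_op l) acc) (@op_id N) c.

(* |psi> (x) |0...0>, ancillae are the last m qubits of n' + m *)
Definition with_zero_ancillae n' m (psi : state n') : state (n' + m) :=
  fun y => if [forall j : 'I_m, ~~ y (rshift n' j)]
           then psi [ffun i : 'I_n' => y (lshift m i)] else 0.

Definition embeds n' m (F : op n') (M : op (n' + m)) : Prop :=
  forall psi : state n',
    op_apply M (@with_zero_ancillae n' m psi) = @with_zero_ancillae n' m (op_apply F psi).

Definition ctrl_mx (U : 'M[Cplx]_2) : 'M[Cplx]_4 := @block_mx Cplx 2 2 2 2 1%:M 0 0 U.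
Definition controlled N (c t : 'I_N) (U : 'M[Cplx]_2) : gate N := Gate2 c t (ctrl_mx U).

Definition ctrl_product N n (t : 'I_N) (cs : 'I_n -> 'I_N) (Us : 'I_n -> 'M[Cplx]_2) : op N :=
  \big[(fun A B => op_mul B A)/@op_id N]_(i < n) gate_op (controlled (cs i) t (Us i)).

(* Main.v *)
Require Import Defs.
From Stdlib Require Import Reals FunctionalExtensionality Lra.
From HB Require Import structures.
From mathcomp Require Import all_boot all_order all_algebra.
From mathcomp Require Import complex Rstruct ring zify.
Set Implicit Arguments. Unset Strict Implicit. Unset Printing Implicit Defensive.
Import Order.TTheory GRing.Theory Num.Theory.

Local Open Scope ring_scope.

Definition upd N (x : basis N) (q : 'I_N) (b : bool) : basis N :=
  [ffun r => if r == q then b else x r].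

Lemma upd_same N (x : basis N) q b : upd x q b q = b.
Proof. by rewrite ffunE eqxx. Qed.
Lemma upd_other N (x : basis N) q b r : r != q -> upd x q b r = x r.
Proof. by rewrite ffunE => /negbTE ->. Qed.
Lemma upd_id N (x : basis N) q : upd x q (x q) = x.
Proof. by apply/ffunP => r; rewrite ffunE; case: eqP => // ->. Qed.
Lemma upd_id' N (x : basis N) q b : x q = b -> upd x q b = x.
Proof. by move=> <-; apply: upd_id. Qed.
Lemma upd_upd N (x : basis N) q b b' : upd (upd x q b) q b' = upd x q b'.
Proof. by apply/ffunP => r; rewrite !ffunE; case: eqP. Qed.

Lemma sum_agree1 N (q : 'I_N) (x : basis N) (F : basis N -> Cplx) :
  \sum_y (agree_off [:: q] x y)%:R * F y = \sum_(b : bool) F (upd x q b).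
Proof.
rewrite (partition_big (fun y : basis N => y q) predT) //=.
apply: eq_bigr => b _.
rewrite (bigD1 (upd x q b)) /=; last by rewrite upd_same eqxx.
rewrite big1 ?addr0.
  have -> : agree_off [:: q] x (upd x q b).
    apply/forallP => r; apply/implyP; rewrite inE => rq.
    by rewrite upd_other.
  by rewrite mul1r.
move=> y /andP [/eqP yq ne].
case ag: (agree_off [:: q] x y); last by rewrite mul0r.
exfalso; move/eqP: ne; apply; apply/ffunP => r; rewrite ffunE.
case: eqP => [->|/eqP rq] //.
move/forallP: ag => /(_ r) /implyP; rewrite inE => /(_ rq) /eqP.
by [].
Qed.

Lemma sum_agree2 N (q1 q2 : 'I_N) (x : basis N) (F : basis N -> Cplx) :
  q1 != q2 ->
  \sum_y (agree_off [:: q1; q2] x y)%:R * F y =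
  \sum_(b1 : bool) \sum_(b2 : bool) F (upd (upd x q1 b1) q2 b2).
Proof.
move=> q12.
rewrite pair_big /=.
rewrite (partition_big (fun y : basis N => (y q1, y q2)) predT) //=.
apply: eq_bigr => [[b1 b2]] _ /=.
have u1 : upd (upd x q1 b1) q2 b2 q1 = b1.
  by rewrite upd_other ?upd_same.
rewrite (bigD1 (upd (upd x q1 b1) q2 b2)) /=; last by rewrite u1 upd_same eqxx.
rewrite big1 ?addr0.
  have -> : agree_off [:: q1; q2] x (upd (upd x q1 b1) q2 b2).
    apply/forallP => r; apply/implyP; rewrite !inE negb_or => /andP [r1 r2].
    by rewrite !upd_other.
  by rewrite mul1r.
move=> y /andP [/eqP yq ne].
case ag: (agree_off [:: q1; q2] x y); last by rewrite mul0r.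
exfalso; move/eqP: ne; apply; apply/ffunP => r; rewrite !ffunE.
case: (r =P q2) => [->|/eqP r2]; first by case: yq.
case: (r =P q1) => [->|/eqP r1]; first by case: yq.
move/forallP: ag => /(_ r) /implyP; rewrite !inE negb_or r1 r2 => /(_ isT) /eqP.
by [].
Qed.

Lemma bit2_val b : nat_of_ord (bit2 b) = nat_of_bool b.
Proof. by rewrite /bit2 inordK //; case: b. Qed.

Lemma bit2_inj : injective bit2.
Proof. by move=> a b /(congr1 val); rewrite /= !bit2_val; case: a; case: b. Qed.

Lemma bit2_eq a b : (bit2 a == bit2 b) = (a == b).
Proof. by apply/eqP/eqP => [/bit2_inj|->]. Qed.

Lemma sum_bit2 (F : 'I_2 -> Cplx) : \sum_(k < 2) F k = \sum_(b : bool) F (bit2 b).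
Proof.
rewrite big_bool !big_ord_recr big_ord0 /= add0r addrC.
by congr (F _ + F _); apply: val_inj; rewrite /= bit2_val.
Qed.

Lemma bit4_lo b : bit4 false b = lshift 2 (bit2 b) :> 'I_(2+2).
Proof. by apply: val_inj; rewrite /= /bit4 inordK ?bit2_val //; case: b. Qed.
Lemma bit4_hi b : bit4 true b = rshift 2 (bit2 b) :> 'I_(2+2).
Proof. by apply: val_inj; rewrite /= /bit4 inordK ?bit2_val //; case: b. Qed.

Lemma ctrl_mx_bit4 (U : 'M[Cplx]_2) a b a' b' :
  ctrl_mx U (bit4 a b) (bit4 a' b') =
  if a then (if a' then U (bit2 b) (bit2 b') else 0)
  else (if a' then 0 else (b == b')%:R).
Proof.
case: a; case: a'; rewrite ?bit4_lo ?bit4_hi /ctrl_mx.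
- exact: (block_mxEdr (1%:M : 'M[Cplx]_2) 0 0 U).
- by rewrite (block_mxEdl (1%:M : 'M[Cplx]_2) 0 0 U) mxE.
- by rewrite (block_mxEur (1%:M : 'M[Cplx]_2) 0 0 U) mxE.
- by rewrite (block_mxEul (1%:M : 'M[Cplx]_2) 0 0 U) mxE bit2_eq.
Qed.

Definition Top N (q : 'I_N) (W : basis N -> 'M[Cplx]_2) (w : state N) : state N :=
  fun x => \sum_(b : bool) W x (bit2 (x q)) (bit2 b) * w (upd x q b).

Lemma apply_gate1 N q (U : 'M[Cplx]_2) (w : state N) :
  op_apply (gate_op (Gate1 q U)) w = Top q (fun _ => U) w.
Proof.
apply: functional_extensionality => x.
rewrite /op_apply /Top /gate_op /=.
transitivity (\sum_y (agree_off [:: q] x y)%:R * (U (bit2 (x q)) (bit2 (y q)) * w y)).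
  by apply: eq_bigr => y _; rewrite mulrA.
rewrite (sum_agree1 q x (fun y => U (bit2 (x q)) (bit2 (y q)) * w y)).
by apply: eq_bigr => b _; rewrite upd_same.
Qed.

Lemma apply_ctrl N (c a : 'I_N) (U : 'M[Cplx]_2) (w : state N) x :
  c != a ->
  op_apply (gate_op (controlled c a U)) w x =
  if x c then \sum_(b : bool) U (bit2 (x a)) (bit2 b) * w (upd x a b) else w x.
Proof.
move=> ca.
rewrite /op_apply /gate_op /controlled /=.
transitivity (\sum_y (agree_off [:: c; a] x y)%:R * (ctrl_mx U (bit4 (x c) (x a)) (bit4 (y c) (y a)) * w y)).
  by apply: eq_bigr => y _; rewrite mulrA.
rewrite (sum_agree2 x (fun y => ctrl_mx U (bit4 (x c) (x a)) (bit4 (y c) (y a)) * w y) ca).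
have e1 : forall b1 b2, upd (upd x c b1) a b2 c = b1.
  by move=> b1 b2; rewrite upd_other ?upd_same // eq_sym.
transitivity (\sum_(b1:bool) \sum_(b2:bool) ctrl_mx U (bit4 (x c) (x a)) (bit4 b1 b2) * w (upd (upd x c b1) a b2)).
  by apply: eq_bigr => b1 _; apply: eq_bigr => b2 _; rewrite e1 upd_same.
rewrite !big_bool !ctrl_mx_bit4.
case xc: (x c); case xa: (x a); rewrite /= ?mul0r ?add0r ?addr0 ?mxE /=
  ?mul1r ?mul0r ?add0r ?addr0 ?(upd_id' xc) ?(upd_id' xa) //.
Qed.

Lemma Top_id N q (w : state N) : Top q (fun _ => 1%:M) w = w.
Proof.
apply: functional_extensionality => x; rewrite /Top big_bool !mxE !bit2_eq.
by case xa: (x q); rewrite /= ?mul1r ?mul0r ?addr0 ?add0r -xa upd_id.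
Qed.

Lemma apply_ctrl_Top N (c a : 'I_N) (U : 'M[Cplx]_2) (w : state N) :
  c != a ->
  op_apply (gate_op (controlled c a U)) w = Top a (fun x => if x c then U else 1%:M) w.
Proof.
move=> ca; apply: functional_extensionality => x.
rewrite apply_ctrl //; case xc: (x c); rewrite /Top xc //.
by have := congr1 (fun f => f x) (Top_id a w); rewrite /Top => ->.
Qed.

Lemma Top_comp N q (W1 W2 : basis N -> 'M[Cplx]_2) (w : state N) :
  (forall x b, W2 (upd x q b) = W2 x) ->
  Top q W1 (Top q W2 w) = Top q (fun x => W1 x *m W2 x) w.
Proof.
move=> h2; apply: functional_extensionality => x; rewrite /Top.
under eq_bigr do rewrite h2 upd_same mulr_sumr.
rewrite exchange_big /=; apply: eq_bigr => b' _.
rewrite mxE sum_bit2 mulr_suml; apply: eq_bigr => b _.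
by rewrite upd_upd mulrA.
Qed.

Lemma op_apply_mul N (A B : op N) (w : state N) :
  op_apply (op_mul A B) w = op_apply A (op_apply B w).
Proof.
apply: functional_extensionality => x; rewrite /op_apply /op_mul.
under eq_bigr do rewrite mulr_suml.
rewrite exchange_big /=; apply: eq_bigr => z _.
by rewrite mulr_sumr; apply: eq_bigr => y _; rewrite mulrA.
Qed.

Lemma op_apply_id N (w : state N) : op_apply (@op_id N) w = w.
Proof.
apply: functional_extensionality => x; rewrite /op_apply /op_id.
rewrite (bigD1 x) //= eqxx mul1r big1 ?addr0 // => y /negbTE.
by rewrite eq_sym => ->; rewrite mul0r.
Qed.

Lemma apply_circuit N (c : circuit N) (w : state N) :
  op_apply (circuit_op c) w = foldl (fun w l => op_apply (layer_op l) w) w c.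
Proof.
rewrite /circuit_op -{2}(op_apply_id w).
elim: c (@op_id N) => [|l c IH] A //=.
by rewrite IH op_apply_mul.
Qed.

Local Open Scope ring_scope.

Lemma apply_layer_perm N (I : Type) (g : I -> gate N) (f : I -> basis N -> basis N)
  (s : seq I) (w : state N) :
  (forall i w, op_apply (gate_op (g i)) w = fun x => w (f i x)) ->
  op_apply (layer_op (map g s)) w = fun x => w (foldl (fun y i => f i y) x s).
Proof.
move=> hg; elim: s w => [|i s IH] w /=.
  by rewrite /layer_op /= op_apply_id.
rewrite /layer_op /= op_apply_mul -/(layer_op (map g s)) IH hg.
by [].
Qed.

Lemma apply_layer_diag N (I : Type) (g : I -> gate N) (phi : I -> basis N -> Cplx)
  (s : seq I) (w : state N) :
  (forall i w, op_apply (gate_op (g i)) w = fun x => phi i x * w x) ->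
  op_apply (layer_op (map g s)) w = fun x => (\prod_(i <- s) phi i x) * w x.
Proof.
move=> hg; elim: s w => [|i s IH] w /=.
  rewrite /layer_op /= op_apply_id; apply: functional_extensionality => x.
  by rewrite big_nil mul1r.
rewrite /layer_op /= op_apply_mul -/(layer_op (map g s)) IH hg.
by apply: functional_extensionality => x; rewrite big_cons mulrA.
Qed.

Definition Xm : 'M[Cplx]_2 := \matrix_(i, j) (i != j)%:R.
Definition Dg (e : 'I_2 -> Cplx) : 'M[Cplx]_2 := \matrix_(i, j) ((i == j)%:R * e i).

Lemma apply_cnot N (c a : 'I_N) (w : state N) : c != a ->
  op_apply (gate_op (controlled c a Xm)) w = fun x => w (upd x a (x a (+) x c)).
Proof.
move=> ca; apply: functional_extensionality => x; rewrite apply_ctrl //.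
case xc: (x c); last by rewrite addbF upd_id.
rewrite big_bool !mxE !bit2_eq.
by case xa: (x a); rewrite /= ?mul1r ?mul0r ?addr0 ?add0r.
Qed.

Lemma apply_phase N (c a : 'I_N) (e : 'I_2 -> Cplx) (w : state N) : c != a ->
  op_apply (gate_op (controlled c a (Dg e))) w =
  fun x => (if x c then e (bit2 (x a)) else 1) * w x.
Proof.
move=> ca; apply: functional_extensionality => x; rewrite apply_ctrl //.
case xc: (x c); last by rewrite mul1r.
rewrite big_bool !mxE !bit2_eq.
by case xa: (x a); rewrite /= ?mul1r ?mul0r ?addr0 ?add0r (upd_id' xa).
Qed.

Lemma apply_layer1 N (g : gate N) (w : state N) :
  op_apply (layer_op [:: g]) w = op_apply (gate_op g) w.
Proof. by rewrite /layer_op /= op_apply_mul op_apply_id. Qed.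

Section LM.
Variables (M : nat) (I : eqType) (a srcf : I -> 'I_M).
Definition lm (s : seq I) (y : basis M) :=
  foldl (fun y i => upd y (a i) (y (a i) (+) y (srcf i))) y s.

Lemma lm_spec (s : seq I) : uniq (map a s) ->
  (forall i j, i \in s -> j \in s -> srcf i != a j) -> forall y,
  (forall i, i \in s -> lm s y (a i) = y (a i) (+) y (srcf i)) /\
  (forall r, r \notin map a s -> lm s y r = y r).
Proof.
elim: s => [|i s IH] /= hu hs y.
  by split => // r; rewrite in_nil.
move/andP: hu => [ais hu].
have hs' : forall i0 j, i0 \in s -> j \in s -> srcf i0 != a j.
  by move=> i0 j h1 h2; apply: hs; rewrite inE ?h1 ?h2 orbT.
have [IH1 IH2] := IH hu hs' (upd y (a i) (y (a i) (+) y (srcf i))).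
split.
  move=> i0; rewrite inE => /orP [/eqP ->|i0s].
    by rewrite IH2 // upd_same.
  rewrite IH1 //.
  have ne : a i0 != a i.
    by apply: contraNneq ais => <-; apply: map_f.
  rewrite !upd_other //.
  by apply: hs; rewrite inE ?i0s ?eqxx ?orbT.
move=> r; rewrite inE negb_or => /andP [ra rs].
by rewrite IH2 // upd_other.
Qed.
End LM.

Lemma uniq_pairs (T : eqType) (I : eqType) (f g : I -> T) (s : seq I) :
  uniq (map f s) -> uniq (map g s) ->
  (forall i j, i \in s -> j \in s -> f i != g j) ->
  uniq (flatten [seq [:: f i; g i] | i <- s]).
Proof.
have mem : forall (s0 : seq I) x, x \in flatten [seq [:: f i; g i] | i <- s0] ->
    exists j, j \in s0 /\ (x = f j \/ x = g j).
  elim=> [|i s0 IH] x //=.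
  rewrite !inE => /orP [/eqP ->|/orP [/eqP ->|/IH [j [js hj]]]].
  - by exists i; rewrite inE eqxx; auto.
  - by exists i; rewrite inE eqxx; auto.
  - by exists j; rewrite inE js orbT.
elim: s => [|i s IH] //= /andP [fi hf] /andP [gi hg] hfg.
rewrite !inE negb_or.
have hfg' : forall i0 j, i0 \in s -> j \in s -> f i0 != g j.
  by move=> i0 j h1 h2; apply: hfg; rewrite inE ?h1 ?h2 orbT.
rewrite IH // andbT -andbA; apply/and3P; split.
- by apply: hfg; rewrite inE eqxx.
- apply/negP => /mem [j [js [e|e]]].
    by move/negP: fi; apply; rewrite e map_f.
  have ij : j \in i :: s by rewrite inE js orbT.
  by move/negP: (hfg i j (mem_head _ _) ij); rewrite e.
- apply/negP => /mem [j [js [e|e]]].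
    have ij : j \in i :: s by rewrite inE js orbT.
    by move/negP: (hfg j i ij (mem_head _ _)); rewrite e.
  by move/negP: gi; apply; rewrite e map_f.
Qed.

Local Open Scope ring_scope.

Definition adj (A : 'M[Cplx]_2) : 'M[Cplx]_2 := (map_mx (@conjc _) A)^T.

Lemma conjcN (x : Cplx) : conjc (- x) = - conjc x.
Proof. exact: rmorphN. Qed.
Lemma conjc0' : conjc (0 : Cplx) = 0.
Proof. exact: rmorph0. Qed.

Lemma unitaryE A : unitary A <-> A *m adj A = 1%:M.
Proof. by []. Qed.

Lemma adjM (A B : 'M[Cplx]_2) : adj (A *m B) = adj B *m adj A.
Proof. by rewrite /adj (map_mxM (@conjc _)) trmx_mul. Qed.

Lemma adjK (A : 'M[Cplx]_2) : adj (adj A) = A.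
Proof.
by apply/matrixP => i j; rewrite !mxE conjcK.
Qed.

Lemma adj1 : adj 1%:M = 1%:M.
Proof. by rewrite /adj (map_mx1 (@conjc _)) trmx1. Qed.

Lemma adjE (A : 'M[Cplx]_2) i j : adj A i j = conjc (A j i).
Proof. by rewrite !mxE. Qed.

Lemma unitaryV (A : 'M[Cplx]_2) : unitary A -> adj A *m A = 1%:M.
Proof. by move/mulmx1C. Qed.

Lemma unitary_adj (A : 'M[Cplx]_2) : unitary A -> unitary (adj A).
Proof. by move=> h; rewrite /unitary -/(adj (adj A)) adjK unitaryV. Qed.

Lemma unitaryM (A B : 'M[Cplx]_2) : unitary A -> unitary B -> unitary (A *m B).
Proof.
move=> ha hb; rewrite /unitary -/(adj (A *m B)) adjM.
by rewrite mulmxA -(mulmxA A) hb mulmx1 ha.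
Qed.

Definition i0 : 'I_2 := @Ordinal 2 0 isT.
Definition i1 : 'I_2 := @Ordinal 2 1 isT.

Lemma ord2P (k : 'I_2) : k = i0 \/ k = i1.
Proof. by case: k => [[|[|k]] h] //; [left|right]; apply: val_inj. Qed.

Lemma mul2E (A B : 'M[Cplx]_2) i j : (A *m B) i j = A i i0 * B i0 j + A i i1 * B i1 j.
Proof.
rewrite mxE !big_ord_recr big_ord0 /=.
have -> : widen_ord (leqnSn 1) ord_max = i0 by apply: val_inj.
have -> : @ord_max 1 = i1 by apply: val_inj.
ring. Qed.

Lemma i01 : (i0 == i1) = false. Proof. by []. Qed.
Lemma i10 : (i1 == i0) = false. Proof. by []. Qed.

Lemma mx2_eq (A B : 'M[Cplx]_2) :
  A i0 i0 = B i0 i0 -> A i0 i1 = B i0 i1 -> A i1 i0 = B i1 i0 -> A i1 i1 = B i1 i1 ->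
  A = B.
Proof.
move=> h00 h01 h10 h11; apply/matrixP => i j.
by case: (ord2P i) => ->; case: (ord2P j) => ->.
Qed.

Lemma Dg_mul e1 e2 : Dg e1 *m Dg e2 = Dg (fun k => e1 k * e2 k).
Proof.
apply/matrixP => i j; rewrite mul2E !mxE.
case: (ord2P i) => ->; case: (ord2P j) => ->; rewrite ?i01 ?i10 ?eqxx /=;
  ring.
Qed.

Lemma Dg1 : Dg (fun _ => 1) = 1%:M.
Proof. by apply/matrixP => i j; rewrite !mxE mulr1. Qed.

Lemma simdiag n (Us : 'I_n -> 'M[Cplx]_2) :
  (forall i, unitary (Us i)) -> (forall i j, Us i *m Us j = Us j *m Us i) ->
  exists V, unitary V /\
    forall i, (adj V *m Us i *m V) i0 i1 = 0 /\ (adj V *m Us i *m V) i1 i0 = 0.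
Proof.
move=> hU hC.
have [hall|] := boolP [forall i, [&& Us i i0 i1 == 0, Us i i1 i0 == 0 & Us i i0 i0 == Us i i1 i1]].
  exists 1%:M; split; first by rewrite /unitary -/(adj 1%:M) adj1 mulmx1.
  move=> i; rewrite adj1 mul1mx mulmx1.
  by move/forallP: hall => /(_ i) /and3P [/eqP -> /eqP -> _].
move/forallPn => [k hk].
set A := Us k in hk.
set a := A i0 i0 in hk; set b := A i0 i1 in hk; set c := A i1 i0 in hk; set d := A i1 i1 in hk.
have [l hl] := @solve_monicpoly Cplx 2
   (fun i => if i == i0 then -(a * d - b * c) else a + d) isT.
move: hl; rewrite !big_ord_recr big_ord0 /= add0r expr0 expr1 mulr1.
move=> hl.
have char : l ^+ 2 - (a + d) * l + (a * d - b * c) = 0.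
  rewrite hl; ring.
have [v0 [v1 [hv [e0 e1]]]] : exists v0 v1, (v0 != 0 \/ v1 != 0) /\
    a * v0 + b * v1 = l * v0 /\ c * v0 + d * v1 = l * v1.
  have [h1|h1] := boolP ((b != 0) || (l - a != 0)).
    exists b, (l - a); split; first by case/orP: h1; auto.
    split; first by ring.
    apply/eqP; rewrite -subr_eq0; apply/eqP.
    by rewrite -[RHS]oppr0 -char; ring.
  exists (l - d), c; split.
    have [h2|h2] := boolP (l - d != 0); first by auto.
    have [h3|h3] := boolP (c != 0); first by auto.
    exfalso; move/negP: hk; apply.
    move: h1; rewrite negb_or !negbK => /andP [/eqP hb /eqP ha].
    move/negbNE/eqP: h2 => hd; move/negbNE/eqP: h3 => hc.
    rewrite -/a -/b -/c -/d hb hc !eqxx /=.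
    have la : l = a by apply/eqP; rewrite -subr_eq0 ha.
    have ld : l = d by apply/eqP; rewrite -subr_eq0 hd.
    by rewrite -la -ld.
  split; last by ring.
  apply/eqP; rewrite -subr_eq0; apply/eqP.
  by rewrite -[RHS]oppr0 -char; ring.
set s := v0 * conjc v0 + v1 * conjc v1.
have s_ge0 : 0 <= s by apply: addr_ge0; apply: mul_conjC_ge0.
have s_ne0 : s != 0.
  rewrite paddr_eq0 ?mul_conjC_ge0 // !mul_conjC_eq0 negb_and.
  by case: hv => ->; rewrite ?orbT.
set r := sqrtC s.
have r_ne0 : r != 0 by rewrite sqrtC_eq0.
have rJ : conjc r = r by apply: conj_Creal; apply: ger0_real; rewrite sqrtC_ge0.
have r2 : r ^+ 2 = s by rewrite sqrtCK.
set u0 := v0 / r; set u1 := v1 / r.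
have hn : u0 * conjc u0 + u1 * conjc u1 = 1.
  rewrite /u0 /u1 !rmorphM /= conjc_inv rJ.
  have r2n : r ^+ 2 != 0 by rewrite expf_eq0 r_ne0.
  rewrite -(divff s_ne0) {2}(_ : s = r ^+ 2) // /s; field; done.
have f0 : a * u0 + b * u1 = l * u0 by rewrite /u0 /u1 !mulrA -mulrDl e0.
have f1 : c * u0 + d * u1 = l * u1 by rewrite /u0 /u1 !mulrA -mulrDl e1.
set V : 'M[Cplx]_2 := \matrix_(i, j) (if i == i0 then (if j == i0 then u0 else - conjc u1)
                                     else (if j == i0 then u1 else conjc u0)).
have hV : V *m adj V = 1%:M.
  apply: mx2_eq; rewrite !mul2E !adjE !mxE ?eqxx ?i01 ?i10 /= ?conjcN ?conjcK;
  rewrite -?hn; ring.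
have hV' : adj V *m V = 1%:M by apply: mulmx1C.
have hVV : forall X : 'M[Cplx]_2, V *m (adj V *m X) = X by move=> X; rewrite mulmxA hV mul1mx.
have hVu : unitary V by [].
exists V; split => //.
have hT : unitary (adj V *m A *m V).
  apply: unitaryM => //; apply: unitaryM => //; first by apply: unitary_adj.
  exact: hU.
have hA : A = V *m (adj V *m A *m V) *m adj V.
  by rewrite !mulmxA hV mul1mx -mulmxA hV mulmx1.
have hcomm : forall i, (adj V *m Us i *m V) *m (adj V *m A *m V) =
                       (adj V *m A *m V) *m (adj V *m Us i *m V).
  move=> i; rewrite -!mulmxA !hVV.
  by rewrite (mulmxA (Us i)) (mulmxA A) hC.
have T10 : (adj V *m A *m V) i1 i0 = 0.
  rewrite !mul2E !adjE !mxE ?eqxx ?i01 ?i10 /= ?conjcN ?conjcK.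
  transitivity (-u1 * (a * u0 + b * u1) + u0 * (c * u0 + d * u1)); first by rewrite /a /b /c /d; ring.
  by rewrite f0 f1; ring.
have T00 : (adj V *m A *m V) i0 i0 = l.
  rewrite !mul2E !adjE !mxE ?eqxx ?i01 ?i10 /= ?conjcN ?conjcK.
  transitivity (conjc u0 * (a * u0 + b * u1) + conjc u1 * (c * u0 + d * u1)); first by rewrite /a /b /c /d; ring.
  by rewrite f0 f1 -[RHS]mulr1 -hn; ring.
set T := adj V *m A *m V in hT hA hcomm T10 T00 *.
clearbody T.
have T01 : T i0 i1 = 0.
  have := congr1 (fun M : 'M[Cplx]_2 => M i0 i0) (unitaryV hT).
  rewrite mul2E !adjE T10 T00 conjc0' mul0r addr0 mxE eqxx /= => hl1.
  have := congr1 (fun M : 'M[Cplx]_2 => M i0 i0) hT.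
  rewrite -/(adj T) mul2E !adjE T00 mxE eqxx /= mulrC hl1.
  move/(congr1 (fun x => x - 1)); rewrite addrC addKr subrr => /eqP.
  by rewrite mul_conjC_eq0 => /eqP.
set mu := T i1 i1.
have lmu : mu - l != 0.
  rewrite subr_eq0; apply/negP => /eqP ml.
  have hT1 : T = l%:M.
    by apply: mx2_eq; rewrite !mxE ?eqxx ?i01 ?i10 /= ?mulr1n ?mulr0n // -ml.
  move: hA; rewrite hT1 mul_mx_scalar -scalemxAl hV => hA.
  move/negP: hk; apply.
  by rewrite /a /b /c /d hA !mxE ?eqxx ?i01 ?i10 /= ?mulr1n ?mulr0n ?mulr0 ?mulr1 !eqxx.
move=> i; have hS := hcomm i.
set S := adj V *m Us i *m V in hS *.
clearbody S.
have h01 := congr1 (fun M : 'M[Cplx]_2 => M i0 i1) hS.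
have h10 := congr1 (fun M : 'M[Cplx]_2 => M i1 i0) hS.
move: h01 h10; rewrite /= !mul2E T00 T01 T10 -/mu => h01 h10.
split.
  have : S i0 i1 * (mu - l) = 0.
    rewrite mulrBr; apply/eqP; rewrite subr_eq0; apply/eqP.
    move: h01; rewrite !mulr0 !mul0r add0r addr0 => ->; ring.
  by move/eqP; rewrite mulf_eq0 (negbTE lmu) orbF => /eqP.
have : S i1 i0 * (mu - l) = 0.
  rewrite mulrBr; apply/eqP; rewrite subr_eq0; apply/eqP.
  move: h10; rewrite !mulr0 !mul0r add0r addr0 => ->; ring.
by move/eqP; rewrite mulf_eq0 (negbTE lmu) orbF => /eqP.
Qed.

Local Open Scope ring_scope.

Lemma DgE e i j : Dg e i j = (i == j)%:R * e i.
Proof. by rewrite mxE. Qed.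

Lemma diag_decomp V U : unitary V ->
  (adj V *m U *m V) i0 i1 = 0 -> (adj V *m U *m V) i1 i0 = 0 ->
  U = V *m Dg (fun k => (adj V *m U *m V) k k) *m adj V.
Proof.
move=> hV h01 h10.
have -> : Dg (fun k => (adj V *m U *m V) k k) = adj V *m U *m V.
  by apply: mx2_eq; rewrite !DgE ?eqxx ?i01 ?i10 ?mul1r ?mul0r ?h01 ?h10.
by rewrite !mulmxA hV mul1mx -mulmxA hV mulmx1.
Qed.

Lemma Dg_unitary e : (forall k, e k * conjc (e k) = 1) -> unitary (Dg e).
Proof.
move=> he; rewrite /unitary -/(adj (Dg e)).
apply: mx2_eq; rewrite !mul2E !adjE !mxE ?eqxx ?i01 ?i10 /= ?conjc0' ?mul1r ?mul0r
  ?conjc0' ?mulr0 ?mul0r ?add0r ?addr0 ?he //.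
Qed.

Lemma Dg_unit V U e : unitary V -> unitary U -> U = V *m Dg e *m adj V ->
  forall k, e k * conjc (e k) = 1.
Proof.
move=> hV hU hUe.
have hD : Dg e = adj V *m U *m V.
  by rewrite hUe !mulmxA (unitaryV hV) mul1mx -mulmxA (unitaryV hV) mulmx1.
have : unitary (Dg e).
  by rewrite hD; apply: unitaryM => //; apply: unitaryM => //; apply: unitary_adj.
rewrite /unitary -/(adj (Dg e)) => h k.
have := congr1 (fun M : 'M[Cplx]_2 => M k k) h.
rewrite mul2E !adjE !mxE eqxx /=.
by case: (ord2P k) => ->; rewrite ?eqxx ?i01 ?i10 /= ?conjc0' ?mul1r ?mul0r ?mulr0
  ?add0r ?addr0 => ->.
Qed.

Lemma simdiag2 n (Us : 'I_n -> 'M[Cplx]_2) :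
  (forall i, unitary (Us i)) -> (forall i j, Us i *m Us j = Us j *m Us i) ->
  exists V, unitary V /\ exists d : 'I_n -> 'I_2 -> Cplx,
    (forall i k, d i k * conjc (d i k) = 1) /\ forall i, Us i = V *m Dg (d i) *m adj V.
Proof.
move=> hU hC; have [V [hV hd]] := simdiag hU hC.
exists V; split => //.
have hdec : forall i, Us i = V *m Dg (fun k => (adj V *m Us i *m V) k k) *m adj V.
  by move=> i; have [h1 h2] := hd i; apply: diag_decomp.
exists (fun i k => (adj V *m Us i *m V) k k); split => //.
by move=> i; apply: Dg_unit (hU i) (hdec i).
Qed.

Lemma ctrl_unitary (U : 'M[Cplx]_2) : unitary U -> unitary (ctrl_mx U).
Proof.
move=> hU.
suff h : (block_mx 1%:M 0 0 U : 'M[Cplx]_(2+2)) *m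
         (map_mx (@conjc _) (block_mx 1%:M 0 0 U : 'M[Cplx]_(2+2)))^T = 1%:M.
  exact: h.
rewrite map_block_mx tr_block_mx mulmx_block.
rewrite (map_mx1 (@conjc _)) !(map_mx0 (@conjc _)) !trmx0 trmx1.
rewrite !mulmx0 !mul0mx !mulmx1 !addr0 !add0r.
by rewrite hU -scalar_mx_block.
Qed.

Lemma Xm_unitary : unitary Xm.
Proof.
rewrite /unitary -/(adj Xm).
apply: mx2_eq; rewrite !mul2E !adjE !mxE ?eqxx ?i01 ?i10 /= ?conjc0' ?conjc1
  ?mul1r ?mul0r ?mulr0 ?add0r ?addr0 //; by rewrite oppr0.
Qed.

Local Close Scope ring_scope.

Lemma split_lshift m n (i : 'I_m) : split (lshift n i) = inl i.
Proof. exact: (unsplitK (inl i)). Qed.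
Lemma split_rshift m n (i : 'I_n) : split (rshift m i) = inr i.
Proof. exact: (unsplitK (inr i)). Qed.
Lemma lshift_rshift_neq m n (a : 'I_m) (b : 'I_n) : lshift n a != rshift m b.
Proof. by apply/eqP => /(congr1 val) /= h; move: (ltn_ord a); rewrite h; lia. Qed.
Lemma rshift_inj' m n : injective (@rshift m n).
Proof. by move=> a b /(congr1 val) /= /addnI /val_inj. Qed.
Lemma lshift_inj' m n : injective (@lshift m n).
Proof. by move=> a b /(congr1 val) /= /val_inj. Qed.

Lemma iotaSr k : iota 0 k.+1 = iota 0 k ++ [:: k].
Proof. by rewrite -addn1 iotaD. Qed.

Definition ord_sub n (i : 'I_n) (k : nat) : 'I_n :=
  Ordinal (leq_ltn_trans (leq_subr k i) (ltn_ord i)).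

Section Fan.
Variables (N n : nat) (t : 'I_N).

Definition tt : 'I_(N + n) := lshift n t.
Definition anc (i : 'I_n) : 'I_(N + n) := rshift N i.
Definition src (j : nat) (i : 'I_n) : 'I_(N + n) :=
  if (2 ^ j <= i)%N then anc (ord_sub i (2 ^ j)) else tt.
Definition inlayer (j : nat) (i : 'I_n) : bool := (2 ^ j <= i.+1) && (i.+1 < 2 ^ j.+1).
Definition lay (j : nat) : seq 'I_n := [seq i <- enum 'I_n | inlayer j i].
Definition FL (j : nat) : layer (N + n) :=
  map (fun i => controlled (src j i) (anc i) Xm) (lay j).
Definition Lmap (j : nat) (y : basis (N + n)) : basis (N + n) := lm anc (src j) (lay j) y.

Definition fan (y : basis (N + n)) (p : nat) : basis (N + n) :=
  [ffun r => match split r with inl _ => y r | inr i => (i.+1 < p) && y tt end].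

Lemma fan_tt (y : basis (N + n)) p : fan y p tt = y tt.
Proof. by rewrite ffunE /tt split_lshift. Qed.
Lemma fan_l (y : basis (N + n)) p q : fan y p (lshift n q) = y (lshift n q).
Proof. by rewrite ffunE split_lshift. Qed.
Lemma fan_anc (y : basis (N + n)) p i : fan y p (anc i) = (i.+1 < p) && y tt.
Proof. by rewrite ffunE /anc split_rshift. Qed.

Lemma src_anc_neq j i i' : inlayer j i -> inlayer j i' -> src j i != anc i'.
Proof.
rewrite /inlayer /src => /andP [h1 h2] /andP [h3 h4].
case: ifP => h5; last by apply: lshift_rshift_neq.
apply/eqP => /rshift_inj' /(congr1 val) /=.
rewrite expnS in h2 h4; lia.
Qed.

Lemma src_anc_neq' j i : src j i != anc i.
Proof.
rewrite /src; case: ifP => h5; last by apply: lshift_rshift_neq.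
apply/eqP => /rshift_inj' /(congr1 val) /=.
have : (0 < 2 ^ j)%N by rewrite expn_gt0.
lia.
Qed.

Lemma uniq_anc_lay j : uniq (map anc (lay j)).
Proof.
rewrite map_inj_uniq; first by rewrite filter_uniq // enum_uniq.
exact: rshift_inj'.
Qed.

Lemma mem_lay j i : (i \in lay j) = inlayer j i.
Proof. by rewrite mem_filter mem_enum andbT. Qed.

Lemma src_notin j i : i \in lay j -> src j i \notin map anc (lay j).
Proof.
move=> hi; apply/mapP => [[i' hi' e]].
rewrite !mem_lay in hi hi'.
by move/eqP: (src_anc_neq hi hi').
Qed.

Lemma Lmap_spec j (y : basis (N + n)) :
  (forall i, i \in lay j -> Lmap j y (anc i) = y (anc i) (+) y (src j i)) /\
  (forall r, r \notin map anc (lay j) -> Lmap j y r = y r).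
Proof.
apply: lm_spec; first exact: uniq_anc_lay.
by move=> i i'; rewrite !mem_lay; apply: src_anc_neq.
Qed.

Lemma anc_notin_l j q : lshift n q \notin map anc (lay j).
Proof. by apply/mapP => [[i _ e]]; move/eqP: (lshift_rshift_neq q i); rewrite e. Qed.

Lemma anc_notin j i : i \notin lay j -> anc i \notin map anc (lay j).
Proof. by move=> h; rewrite mem_map //; exact: rshift_inj'. Qed.

Lemma L_fan j (y : basis (N + n)) : Lmap j (fan y (2 ^ j)) = fan y (2 ^ j.+1).
Proof.
have [H1 H2] := Lmap_spec j (fan y (2 ^ j)).
apply/ffunP => r; rewrite -(splitK r); case: (split r) => [q|i] /=.
  by rewrite H2 ?anc_notin_l // !fan_l.
have -> : rshift N i = anc i by [].
case hi: (i \in lay j).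
  rewrite H1 // !fan_anc; move: hi; rewrite mem_lay /inlayer => /andP [h1 h2].
  rewrite h2 /=.
  have -> : (i.+1 < 2 ^ j)%N = false by apply/negbTE; rewrite -leqNgt.
  rewrite /=; rewrite /src; case: ifP => h3.
    rewrite fan_anc /=.
    have -> : ((ord_sub i (2 ^ j)).+1 < 2 ^ j)%N by rewrite /=; rewrite expnS in h2; lia.
    by [].
  by rewrite fan_tt.
rewrite H2; last by apply: anc_notin; rewrite hi.
rewrite !fan_anc; move: hi; rewrite mem_lay /inlayer => /negbT.
rewrite negb_and -!ltnNge => h.
congr (_ && _); apply/idP/idP; rewrite expnS in h *; lia.
Qed.

Lemma L_inv j (y : basis (N + n)) : Lmap j (Lmap j y) = y.
Proof.
have [H1 H2] := Lmap_spec j y.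
have [H1' H2'] := Lmap_spec j (Lmap j y).
apply/ffunP => r; rewrite -(splitK r); case: (split r) => [q|i] /=.
  by rewrite H2' ?anc_notin_l // H2 ?anc_notin_l.
have -> : rshift N i = anc i by [].
case hi: (i \in lay j).
  rewrite H1' // H1 // H2; last exact: src_notin.
  by rewrite -addbA addbb addbF.
have hn : anc i \notin map anc (lay j) by apply: anc_notin; rewrite hi.
by rewrite H2' // H2.
Qed.

Lemma fan1 (y : basis (N + n)) : (forall i, y (anc i) = false) -> fan y 1 = y.
Proof.
move=> hy; apply/ffunP => r; rewrite -(splitK r) ffunE.
case: (split r) => [q|i] /=; first by rewrite split_lshift.
by rewrite split_rshift; have := hy i.
Qed.

Lemma fwd k (y : basis (N + n)) : (forall i, y (anc i) = false) ->
  foldl (fun y j => Lmap j y) y (iota 0 k) = fan y (2 ^ k).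
Proof.
move=> hy; elim: k => [|k IH]; first by rewrite /= fan1.
by rewrite iotaSr foldl_cat IH /= L_fan.
Qed.

Lemma roundtrip k (y : basis (N + n)) :
  foldr (fun j y => Lmap j y) (foldl (fun y j => Lmap j y) y (iota 0 k)) (iota 0 k) = y.
Proof.
elim: k y => [|k IH] y //.
by rewrite iotaSr foldl_cat foldr_cat /= L_inv IH.
Qed.

Lemma apply_FL j (w : state (N + n)) :
  op_apply (layer_op (FL j)) w = fun x => w (Lmap j x).
Proof.
rewrite /FL (apply_layer_perm (f := fun i y => upd y (anc i) (y (anc i) (+) y (src j i)))).
  by [].
by move=> i w'; apply: apply_cnot; apply: src_anc_neq'.
Qed.

Lemma apply_FLs s (w : state (N + n)) :
  foldl (fun w l => op_apply (layer_op l) w) w (map FL s) =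
  fun x => w (foldr (fun j y => Lmap j y) x s).
Proof.
elim: s w => [|j s IH] w /=; first by [].
by rewrite IH apply_FL.
Qed.

End Fan.

Local Close Scope ring_scope.

Section Phase.
Variables (N n : nat) (t : 'I_N) (cs : 'I_n -> 'I_N) (d : 'I_n -> 'I_2 -> Cplx).

Definition rep (j : 'I_n) : 'I_n := [arg min_(i < j | cs i == cs j) i].
Definition isrep (i : 'I_n) : bool := rep i == i.
Definition reps : seq 'I_n := [seq i <- enum 'I_n | isrep i].
Definition cc (i : 'I_n) : 'I_(N + n) := lshift n (cs i).
Definition ee (i : 'I_n) (k : 'I_2) : Cplx := (\prod_(j | cs j == cs i) d j k)%R.
Definition PH : layer (N + n) :=
  map (fun i => controlled (cc i) (anc N i) (Dg (ee i))) reps.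
Definition phi (x : basis (N + n)) : Cplx :=
  (\prod_(i <- reps) (if x (cc i) then ee i (bit2 (x (anc N i))) else 1))%R.

Lemma rep_spec j : cs (rep j) = cs j /\ forall i, cs i = cs j -> (rep j <= i)%N.
Proof.
rewrite /rep; case: arg_minnP => // m /eqP hm hmin; split => // i hi.
by apply: hmin; apply/eqP.
Qed.

Lemma rep_eq j j' : cs j = cs j' -> rep j = rep j'.
Proof.
move=> e; have [h1 h2] := rep_spec j; have [h3 h4] := rep_spec j'.
apply: val_inj; apply/eqP; rewrite eqn_leq; apply/andP; split.
  by apply: h2; rewrite h3.
by apply: h4; rewrite h1.
Qed.

Lemma isrep_rep j : isrep (rep j).
Proof. by rewrite /isrep; apply/eqP; apply: rep_eq; case: (rep_spec j). Qed.

Lemma rep_iff r j : isrep r -> (rep j == r) = (cs j == cs r).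
Proof.
move=> /eqP hr; apply/eqP/eqP => [<-|e].
  by case: (rep_spec j).
by rewrite (rep_eq e) hr.
Qed.

Lemma apply_PH (w : state (N + n)) :
  op_apply (layer_op PH) w = fun x => (phi x * w x)%R.
Proof.
rewrite /PH (apply_layer_diag (phi := fun i x => if x (cc i) then ee i (bit2 (x (anc N i))) else 1%R)).
  by [].
by move=> i w'; apply: apply_phase; apply: lshift_rshift_neq.
Qed.

Lemma phi_fan (y : basis (N + n)) p : (n < p)%N ->
  phi (fan t y p) = (\prod_(i <- reps) (if y (cc i) then ee i (bit2 (y (tt n t))) else 1))%R.
Proof.
move=> hp; apply: eq_bigr => i _.
rewrite /cc fan_l fan_anc.
have -> : (i.+1 < p)%N by move: (ltn_ord i); lia.
by [].
Qed.

Lemma regroup (c : 'I_N -> bool) k :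
  (\prod_(i <- reps) (if c (cs i) then ee i k else 1))%R =
  (\prod_(j < n) (if c (cs j) then d j k else 1))%R.
Proof.
rewrite /reps big_filter big_enum_cond /=.
symmetry; rewrite (partition_big rep isrep) //=; last by move=> j _; apply: isrep_rep.
apply: eq_bigr => r hr.
rewrite (eq_bigl (fun j => cs j == cs r)); last by move=> j; rewrite rep_iff.
rewrite /ee; case hc: (c (cs r)).
  by apply: eq_bigr => j /eqP ->; rewrite hc.
by rewrite big1 // => j /eqP ->; rewrite hc.
Qed.

End Phase.

Lemma phi_total N n (t : 'I_N) (cs : 'I_n -> 'I_N) d (y : basis (N + n)) p : (n < p)%N ->
  phi cs d (fan t y p) =
  (\prod_(j < n) (if y (lshift n (cs j)) then d j (bit2 (y (tt n t))) else 1))%R.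
Proof.
move=> hp; rewrite phi_fan //.
exact: (regroup cs d (fun q => y (lshift n q))).
Qed.

Lemma phi_upd N n (t : 'I_N) (cs : 'I_n -> 'I_N) d (x : basis (N + n)) b p :
  (forall i, cs i != t) -> (n < p)%N ->
  phi cs d (fan t (upd x (tt n t) b) p) =
  (\prod_(j < n) (if x (lshift n (cs j)) then d j (bit2 b) else 1))%R.
Proof.
move=> hcs hp; rewrite phi_total // upd_same.
apply: eq_bigr => j _; rewrite upd_other //.
by apply/eqP => /lshift_inj' e; move/eqP: (hcs j); rewrite e.
Qed.

Local Open Scope ring_scope.

Lemma apply_ctrl_prod N n (t : 'I_N) (cs : 'I_n -> 'I_N) (Us : 'I_n -> 'M[Cplx]_2)
  (w : state N) : (forall i, cs i != t) ->
  op_apply (ctrl_product t cs Us) w =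
  Top t (fun x => \big[(fun A B => B *m A)/1%:M]_(i < n) (if x (cs i) then Us i else 1%:M)) w.
Proof.
move=> hcs; rewrite /ctrl_product.
elim: (index_enum 'I_n) w => [|i r IH] w.
  rewrite big_nil op_apply_id.
  transitivity (Top t (fun _ => 1%:M) w); first by rewrite Top_id.
  by congr Top; apply: functional_extensionality => x; rewrite big_nil.
rewrite big_cons /= op_apply_mul IH apply_ctrl_Top; last exact: hcs.
rewrite Top_comp; last by move=> x b; rewrite upd_other.
by congr Top; apply: functional_extensionality => x; rewrite big_cons.
Qed.

Lemma W_eq (V : 'M[Cplx]_2) n (Us : 'I_n -> 'M[Cplx]_2) (d : 'I_n -> 'I_2 -> Cplx)
  (c : 'I_n -> bool) (r : seq 'I_n) :
  unitary V -> (forall i, Us i = V *m Dg (d i) *m adj V) ->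
  \big[(fun A B => B *m A)/1%:M]_(i <- r) (if c i then Us i else 1%:M) =
  V *m Dg (fun k => \prod_(i <- r) (if c i then d i k else 1))%R *m adj V.
Proof.
move=> hV hUs; elim: r => [|a r IH].
  rewrite big_nil.
  rewrite (_ : (fun k => \prod_(i <- [::]) (if c i then d i k else 1))%R = fun _ => 1%R).
    by rewrite Dg1 mulmx1 hV.
  by apply: functional_extensionality => k; rewrite big_nil.
rewrite big_cons IH.
have -> : (fun k => \prod_(i <- a :: r) (if c i then d i k else 1))%R =
          (fun k => (\prod_(i <- r) (if c i then d i k else 1)) * (if c a then d a k else 1))%R.
  by apply: functional_extensionality => k; rewrite big_cons mulrC.
case: (c a).
  rewrite hUs -!mulmxA; congr (_ *m _).
  by rewrite (mulmxA (adj V) V) (unitaryV hV) mul1mx mulmxA Dg_mul.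
rewrite mulmx1.
by rewrite (_ : (fun k => _ * _)%R = (fun k => \prod_(i <- r) (if c i then d i k else 1))%R) //;
  apply: functional_extensionality => k; rewrite GRing.mulr1.
Qed.

Lemma mulmx_DgE (A : 'M[Cplx]_2) e i j : (A *m Dg e) i j = (A i j * e j)%R.
Proof.
rewrite mul2E !DgE.
by case: (ord2P j) => ->; rewrite ?eqxx ?i01 ?i10 /= ?mul1r ?mul0r ?mulr0 ?add0r ?addr0.
Qed.

Lemma entry3 (V A : 'M[Cplx]_2) e r s :
  (V *m Dg e *m A) r s = (\sum_(b : bool) V r (bit2 b) * (e (bit2 b) * A (bit2 b) s))%R.
Proof.
rewrite mxE sum_bit2; apply: eq_bigr => b _.
by rewrite mulmx_DgE mulrA.
Qed.

Lemma v0_upd N n (t : 'I_N) (psi : state N) (x : basis (N + n)) b :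
  @with_zero_ancillae N n psi (upd x (tt n t) b) =
  if [forall j, ~~ x (rshift N j)] then psi (upd [ffun i => x (lshift n i)] t b) else 0%R.
Proof.
rewrite /with_zero_ancillae.
have -> : [forall j, ~~ upd x (tt n t) b (rshift N j)] = [forall j, ~~ x (rshift N j)].
  apply: eq_forallb => j; rewrite upd_other //.
  by rewrite eq_sym; apply: lshift_rshift_neq.
case: ifP => // _; congr psi; apply/ffunP => i; rewrite !ffunE.
rewrite /tt; case: (i =P t) => [->|/eqP it]; first by rewrite eqxx.
rewrite ifN //; apply/eqP => /lshift_inj' e; move/eqP: it; apply; exact: e.
Qed.

Section RealFacts.
Local Open Scope R_scope.

Lemma INR_expn2 k : INR (2 ^ k)%N = 2 ^ k.
Proof.
elim: k => [|k IH]; first by [].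
rewrite expnS -multE mult_INR IH /=; lra.
Qed.

Lemma ln_mono x y : 0 < x -> x <= y -> ln x <= ln y.
Proof.
move=> hx hxy; case: (Rle_lt_or_eq_dec _ _ hxy) => h.
  by apply: Rlt_le; apply: ln_increasing.
by rewrite h; apply: Rle_refl.
Qed.

Lemma depth_bound n : (2 <= n)%N ->
  INR (2 * (trunc_log 2 n).+1 + 3)%N <= 14 * ln (INR n).
Proof.
move=> hn; set k := trunc_log 2 n.
have h1 : (2 ^ k <= n)%N by apply: trunc_logP => //; lia.
have h2 : INR (2 ^ k)%N <= INR n by apply: le_INR; apply/ssrnat.leP.
rewrite INR_expn2 in h2.
have h3 : ln (2 ^ k) <= ln (INR n).
  by apply: ln_mono => //; apply: pow_lt; lra.
rewrite ln_pow in h3; last lra.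
have h4 : ln 2 <= ln (INR n).
  apply: ln_mono; first lra.
  have : INR 2 <= INR n by apply: le_INR; apply/ssrnat.leP.
  by rewrite /=; lra.
have h5 := ln_lt_2.
have h6 : 0 <= INR k by apply: pos_INR.
have -> : INR (2 * k.+1 + 3)%N = 2 * INR k + 5.
  rewrite plus_INR mult_INR (S_INR k); change (INR 2) with (1+1); change (INR 3) with (1+1+1); lra.
nra.
Qed.
End RealFacts.

Local Open Scope ring_scope.

Lemma In_cat T (x : T) (s1 s2 : seq T) : List.In x (s1 ++ s2) -> List.In x s1 \/ List.In x s2.
Proof. elim: s1 => [|y s1 IH] /=; first by right. by case=> [->|/IH [h|h]]; auto. Qed.

Lemma In_map T U (f : T -> U) y (s : seq T) : List.In y (map f s) -> exists x, y = f x.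
Proof. elim: s => [|x s IH] //= [<-|/IH //]; by exists x. Qed.

Lemma gate1_valid N q (U : 'M[Cplx]_2) : unitary U -> layer_valid [:: @Gate1 N q U].
Proof. by move=> hU; split => // g [<-|[]]. Qed.

Lemma FL_valid N n (t : 'I_N) j : layer_valid (FL n t j).
Proof.
split.
  move=> g hg; have [i ->] := In_map hg; rewrite /=; split; first exact: src_anc_neq'.
  by apply: ctrl_unitary; apply: Xm_unitary.
rewrite /FL -map_comp.
rewrite (eq_map (_ : _ =1 fun i => [:: src t j i; anc N i])) //.
apply: uniq_pairs.
- rewrite map_inj_in_uniq; first by rewrite filter_uniq // enum_uniq.
  move=> i i' hi hi'.
  rewrite !mem_lay /inlayer in hi hi'.
  move: hi hi' => /andP [a1 a2] /andP [a3 a4].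
  rewrite /src; case: ifP => h1; case: ifP => h2.
  + move/rshift_inj' => /(congr1 val) /= e; apply: ord_inj; lia.
  + by move/eqP; rewrite eq_sym (negbTE (lshift_rshift_neq _ _)).
  + by move/eqP; rewrite (negbTE (lshift_rshift_neq _ _)).
  + by move=> _; apply: ord_inj; lia.
- exact: uniq_anc_lay.
- by move=> i i'; rewrite !mem_lay; apply: src_anc_neq.
Qed.

Lemma PH_valid N n (cs : 'I_n -> 'I_N) d :
  (forall i k, d i k * conjc (d i k) = 1) -> layer_valid (PH cs d).
Proof.
move=> hd; split.
  move=> g hg; have [i ->] := In_map hg; rewrite /=; split; first exact: lshift_rshift_neq.
  apply: ctrl_unitary; apply: Dg_unitary => k.
  rewrite /ee (rmorph_prod (@conjc _)) -big_split /=.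
  by rewrite big1 // => j _; apply: hd.
rewrite /PH -map_comp.
rewrite (eq_map (_ : _ =1 fun i => [:: cc cs i; anc N i])) //.
apply: uniq_pairs.
- rewrite map_inj_in_uniq; first by rewrite filter_uniq // enum_uniq.
  move=> i i'.
  rewrite !mem_filter => /andP [/eqP hi _] /andP [/eqP hi' _].
  move/lshift_inj' => e.
  by rewrite -hi -hi'; apply: rep_eq.
- rewrite map_inj_uniq; [by rewrite filter_uniq // enum_uniq | exact: rshift_inj'].
- by move=> i j _ _; apply: lshift_rshift_neq.
Qed.

Lemma foldr_rev' T R (f : T -> R -> R) z (s : seq T) :
  foldr f z (rev s) = foldl (fun z x => f x z) z s.
Proof. by rewrite -{2}(revK s) foldl_rev. Qed.

Theorem proposition4 :
  exists c : Rdefinitions.R, (0 < c)%R /\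
  forall (n : nat), (2 <= n)%N ->
  forall (N : nat) (t : 'I_N) (cs : 'I_n -> 'I_N) (Us : 'I_n -> 'M[Cplx]_2),
    (forall i, cs i != t) ->
    (forall i, unitary (Us i)) ->
    (forall i j, Us i *m Us j = Us j *m Us i) ->
    exists (m : nat) (circ : circuit (N + m)),
      (INR m <= c * INR n)%R /\
      (INR (size circ) <= c * ln (INR n))%R /\
      circuit_valid circ /\
      embeds (ctrl_product t cs Us) (circuit_op circ).
Proof.
exists (IZR 14); split; first by apply/RltP; apply: (IZR_lt 0 14).
idtac.
move=> n hn N t cs Us hcs hU hC.
have [V [hV [d [hd hUs]]]] := simdiag2 hU hC.
have hk : (n < 2 ^ (trunc_log 2 n).+1)%N by apply: trunc_log_ltn.
have hb := depth_bound hn.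
move: (trunc_log 2 n).+1 hk hb => k hk hb.
pose L1 : layer (N + n) := [:: Gate1 (tt n t) (adj V)].
pose L5 : layer (N + n) := [:: Gate1 (tt n t) V].
exists n, ([:: L1] ++ map (FL n t) (iota 0 k) ++ [:: PH cs d] ++
           map (FL n t) (rev (iota 0 k)) ++ [:: L5]).
split.
  apply/RleP; rewrite -RmultE; have := pos_INR n; lra.
split.
  apply/RleP; rewrite -RmultE.
  rewrite (_ : size _ = (2 * k + 3)%N); first exact: hb.
  by rewrite !size_cat !size_map size_rev size_iota /=; lia.
split.
  move=> l hl.
  case: (In_cat hl) => [[<-|[]]|{}hl]; first by apply: gate1_valid; apply: unitary_adj.
  case: (In_cat hl) => {}hl; first by have [j ->] := In_map hl; apply: FL_valid.
  case: (In_cat hl) => [[<-|[]]|{}hl]; first by apply: PH_valid.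
  case: (In_cat hl) => {}hl; first by have [j ->] := In_map hl; apply: FL_valid.
  by case: hl => [<-|[]]; apply: gate1_valid.
move=> psi.
rewrite apply_circuit !foldl_cat /= !apply_layer1 !apply_gate1 !apply_FLs apply_PH.
rewrite (apply_ctrl_prod _ _ hcs).
apply: functional_extensionality => x.
rewrite {1}/Top.
under eq_bigr do rewrite foldr_rev' roundtrip.
set xN : basis N := [ffun i => x (lshift n i)].
rewrite {2}/with_zero_ancillae -/xN.
case hz: [forall j, ~~ x (rshift N j)]; last first.
  rewrite big1 // => b _.
  rewrite /Top big1 ?mulr0 // => b' _.
  by rewrite upd_upd v0_upd hz mulr0.
have hz' : forall i, x (anc N i) = false.
  by move=> i; move/forallP: hz => /(_ i) /negbTE.
have za : forall b i, upd x (tt n t) b (anc N i) = false.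
  move=> b i; rewrite upd_other ?hz' //.
  by rewrite eq_sym; apply: lshift_rshift_neq.
pose dl (k0 : 'I_2) := \prod_(j < n) (if xN (cs j) then d j k0 else 1).
transitivity (\sum_(b : bool) V (bit2 (x (tt n t))) (bit2 b) *
   (dl (bit2 b) * \sum_(b' : bool) adj V (bit2 b) (bit2 b') * psi (upd xN t b'))).
  apply: eq_bigr => b _.
  rewrite (fwd t k (za b)) (phi_upd _ _ _ hcs hk).
  congr (_ * (_ * _)).
    by apply: eq_bigr => j _; rewrite ffunE.
  rewrite /Top upd_same; apply: eq_bigr => b' _.
  by rewrite upd_upd v0_upd hz.
have xNt : xN t = x (tt n t) by rewrite ffunE.
rewrite /Top xNt.
rewrite (W_eq (fun i => xN (cs i)) (index_enum 'I_n) hV hUs).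
transitivity (\sum_(b : bool) \sum_(b' : bool) V (bit2 (x (tt n t))) (bit2 b) *
   (dl (bit2 b) * (adj V (bit2 b) (bit2 b') * psi (upd xN t b')))).
  by apply: eq_bigr => b _; rewrite !mulr_sumr.
rewrite exchange_big; apply: eq_bigr => b' _.
rewrite entry3 mulr_suml; apply: eq_bigr => b _.
by rewrite !mulrA.
Qed.
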